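(* Let $K=4$ and let $M$ be an integer with $1\le M\le 15$. Index antennas by $\{1,\dots,4M\}$ and let $I_i=\{(i-1)M+1,\dots,iM\}$ for $i=1,\dots,4$. For generic $H,U,W\in\mathbb{C}^{4M\times 4M}$ (that is, outside the zero set of some nonzero polynomial in their entries), there exist block diagonal matrices $D_1,D_2,D_3\in\mathbb{C}^{4M\times 4M}$ with diagonal blocks of size $M\times M$ (block $i$ indexed by $I_i$) and scalars $\lambda_1,\dots,\lambda_{4M}\in\mathbb{C}$ such that, with $B:=HD_1+HD_2U+WD_3H$: for every $i$ and every $m\in I_i$, $B_{mj}=\lambda_m H_{mj}$ for all $j\notin I_i$; and for every $i$, the $M\times M$ matrix $\big(B_{mm'}-\lambda_m H_{mm'}\big)_{m,m'\in I_i}$ is nonsingular.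
   Context: Setting: a 4-user MIMO interference channel with full-duplex in-band interaction, each source and destination having $M$ antennas; antennas of user $i$ are indexed by $I_i$. $H$ is the channel matrix from source antennas to destination antennas, $U$ among source antennas, $W$ among destination antennas. In a two-phase scheme sources send $x$ (receiving $Ux$ while destinations receive $Hx$), then sources send $D_1x+D_2Ux$ and destinations send $D_3Hx$, so destinations receive $Bx$ (noise ignored). The conditions imply each destination can cancel all interference and recover its $M$ desired symbols, giving $2M$ sum degrees of freedom. *)

(* Defs.v *)
From HB Require Import structures.
From mathcomp Require Import all_boot all_order all_algebra.
From mathcomp Require Import complex.
From mathcomp Require Import Rstruct.
From mathcomp Require Import mpoly.
From Stdlib Require Import Rdefinitions.
Set Implicit Arguments. Unset Strict Implicit. Unset Printing Implicit Defensive.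
Import GRing.Theory.

Local Open Scope ring_scope.
Definition C : Type := complex Rdefinitions.R.
HB.instance Definition _ := GRing.ClosedField.on C.

(* Antennas are indexed (0-based) by 'I_(4*M); antenna m belongs to user
   block m %/ M (0-based), i.e. I_(i+1) = {m | m %/ M = i}. *)
Definition blk (M : nat) (m : 'I_(4 * M)) : nat := divn (nat_of_ord m) M.

Definition block_diag (M : nat) (D : 'M[C]_(4 * M)) : Prop :=
  forall m j : 'I_(4 * M), blk m <> blk j -> D m j = 0.

Local Close Scope ring_scope.
Lemma antenna_idx_proof (M : nat) (i : 'I_4) (a : 'I_M) : (nat_of_ord i * M + nat_of_ord a < 4 * M)%N.
Proof.
case: i => i /= Hi; case: a => a /= Ha.
have H1 : (i * M + a < i * M + M)%N by rewrite ltn_add2l.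
apply: (leq_trans H1).
have -> : (i * M + M = i.+1 * M)%N by rewrite mulSn addnC.
by rewrite leq_mul2r Hi orbT.
Qed.

Local Open Scope ring_scope.
Definition antenna (M : nat) (i : 'I_4) (a : 'I_M) : 'I_(4 * M) :=
  Ordinal (antenna_idx_proof i a).

(* vector of all entries of H, U, W, used as the variables of a polynomial *)
Definition entries (M : nat) (H U W : 'M[C]_(4 * M)) :
  'I_(4 * M * (4 * M + 4 * M + 4 * M)) -> C :=
  fun k => mxvec (row_mx (row_mx H U) W) 0 k.

(* Main.v *)
Require Import Defs.
From HB Require Import structures.
From mathcomp Require Import all_boot all_order all_algebra.
From mathcomp Require Import complex Rstruct.
From mathcomp Require Import mpoly.
From mathcomp Require Import ring zify.
From Stdlib Require Rdefinitions.
Set Implicit Arguments. Unset Strict Implicit. Unset Printing Implicit Defensive.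
Import GRing.Theory Num.Theory.
Local Open Scope ring_scope.
Lemma shuf3 (V : nmodType) (a1 a2 a3 b1 b2 b3 : V) :
  a1 + b1 + (a2 + b2) + (a3 + b3) = a1 + a2 + a3 + (b1 + b2 + b3).
Proof. by rewrite (addrACA a1) (addrACA (a1 + a2)). Qed.
Lemma shuf2 (V : nmodType) (a1 a2 b1 b2 : V) :
  a1 + b1 + (a2 + b2) = a1 + a2 + (b1 + b2).
Proof. exact: addrACA. Qed.

Section Gen.
Variables (R : comRingType) (M : nat).
Local Notation n := (muln 4 M).
Local Notation N3 := (addn (addn (muln 4 M) (muln 4 M)) (muln 4 M)).

Definition onb (A : 'M[R]_n) : 'M[R]_n :=
  \matrix_(m, j) if blk m == blk j then A m j else 0.
Definition offb (A : 'M[R]_n) : 'M[R]_n :=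
  \matrix_(m, j) if blk m == blk j then 0 else A m j.

Local Close Scope ring_scope.
Lemma sh_proof (t : nat) (j : 'I_n) : (modn (blk j + t.+1) 4 * M + modn j M < n)%N.
Proof.
have M0 : (0 < M)%N by case: M j => // [[]].
have h1 : (modn j M < M)%N by rewrite ltn_pmod.
have h2 : (modn (blk j + t.+1) 4 < 4)%N by rewrite ltn_pmod.
move: h1 h2; set r := (modn j M)%N; set q := (modn (blk j + t.+1) 4)%N => h1 h2.
nia.
Qed.

Local Open Scope ring_scope.
Definition sh t (j : 'I_n) : 'I_n := Ordinal (sh_proof t j).
Definition shc t (A : 'M[R]_n) : 'M[R]_n := \matrix_(m, j) A m (sh t j).
Definition Bm (H U W D1 D2 D3 : 'M[R]_n) : 'M[R]_n :=
  H *m D1 + H *m D2 *m U + W *m D3 *m H.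
Definition D1of (Z : 'M[R]_(n, N3)) : 'M[R]_n := lsubmx (lsubmx Z).
Definition D2of (Z : 'M[R]_(n, N3)) : 'M[R]_n := rsubmx (lsubmx Z).
Definition D3of (Z : 'M[R]_(n, N3)) : 'M[R]_n := rsubmx Z.
Definition BZ H U W Z := Bm H U W (D1of Z) (D2of Z) (D3of Z).
Definition Fm (H U W : 'M[R]_n) (Z : 'M[R]_(n, N3)) : 'M[R]_(n, N3) :=
  row_mx (row_mx (offb (D1of Z) + onb (shc 0 (BZ H U W Z)))
                 (offb (D2of Z) + onb (shc 1 (BZ H U W Z))))
         (offb (D3of Z) + onb (shc 2 (BZ H U W Z))).

Lemma onb_lin : linear onb.
Proof. by move=> a A B; apply/matrixP=> i j; rewrite !mxE; case: ifP; rewrite ?mulr0 ?addr0. Qed.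
Lemma offb_lin : linear offb.
Proof. by move=> a A B; apply/matrixP=> i j; rewrite !mxE; case: ifP; rewrite ?mulr0 ?addr0. Qed.
Lemma shc_lin t : linear (shc t).
Proof. by move=> a A B; apply/matrixP=> i j; rewrite !mxE. Qed.
Lemma Bm_lin H U W a D1 D2 D3 E1 E2 E3 :
  Bm H U W (a *: D1 + E1) (a *: D2 + E2) (a *: D3 + E3) =
  a *: Bm H U W D1 D2 D3 + Bm H U W E1 E2 E3.
Proof.
rewrite /Bm !(mulmxDr, mulmxDl) -!scalemxAr -!scalemxAl !scalerDr.
exact: shuf3.
Qed.
Lemma Fm_lin H U W : linear (Fm H U W).
Proof.
move=> a Z1 Z2; rewrite /Fm /BZ /D1of /D2of /D3of !linearP Bm_lin.
rewrite !(onb_lin, offb_lin, shc_lin) scale_row_mx add_row_mx scale_row_mx add_row_mx.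
by rewrite !scalerDr; congr (row_mx (row_mx _ _) _); exact: shuf2.
Qed.
End Gen.
HB.instance Definition _ (R : comRingType) (M : nat) :=
  GRing.isLinear.Build R _ _ *:%R (@onb R M) (@onb_lin R M).
HB.instance Definition _ (R : comRingType) (M : nat) :=
  GRing.isLinear.Build R _ _ *:%R (@offb R M) (@offb_lin R M).
HB.instance Definition _ (R : comRingType) (M : nat) t :=
  GRing.isLinear.Build R _ _ *:%R (@shc R M t) (@shc_lin R M t).
HB.instance Definition _ (R : comRingType) (M : nat) H U W :=
  GRing.isLinear.Build R _ _ *:%R (@Fm R M H U W) (@Fm_lin R M H U W).

Definition lam0 (i : nat) : int := match i with 0 => 1 | 1 => 2 | _ => 0 end.

Section Gen2.
Variables (R : comRingType) (M : nat).
Local Notation n := (muln 4 M).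
Local Notation N3 := (addn (addn (muln 4 M) (muln 4 M)) (muln 4 M)).

Definition lamv (d : R) (m : 'I_n) : R := d * (lam0 (blk m))%:~R.
Definition LamH (d : R) (H : 'M[R]_n) : 'M[R]_n := \matrix_(m, j) (lamv d m * H m j).
Definition Rhs (H : 'M[R]_n) (d : R) : 'M[R]_(n, N3) :=
  row_mx (row_mx (onb (shc 0 (LamH d H))) (onb (shc 1 (LamH d H)))) (onb (shc 2 (LamH d H))).
Definition Lm (H U W : 'M[R]_n) := lin_mx (Fm H U W).
Definition dd (H U W : 'M[R]_n) := \det (Lm H U W).
Definition Zs (H U W : 'M[R]_n) : 'M[R]_(n, N3) :=
  vec_mx (mxvec (Rhs H 1) *m \adj (Lm H U W)).
Definition Ei (H U W : 'M[R]_n) (i : 'I_4) : 'M[R]_M :=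
  \matrix_(a < M, b < M)
    (BZ H U W (Zs H U W) (antenna i a) (antenna i b)
      - lamv (dd H U W) (antenna i a) * H (antenna i a) (antenna i b)).

Lemma RhsZ H d : Rhs H d = d *: Rhs H 1.
Proof.
rewrite /Rhs; have -> : LamH d H = d *: LamH 1 H.
  by apply/matrixP=> i j; rewrite !mxE /lamv mul1r mulrA.
by rewrite !linearZ /= !scale_row_mx.
Qed.

Lemma Fm_Zs H U W : Fm H U W (Zs H U W) = Rhs H (dd H U W).
Proof.
apply: (can_inj mxvecK); rewrite -mul_vec_lin /Zs vec_mxK -mulmxA.
by rewrite /Lm mul_adj_mx mul_mx_scalar [in RHS]RhsZ linearZ.
Qed.
End Gen2.
Section Extract.
Variable M : nat.
Local Notation n := (muln 4 M).
Local Notation N3 := (addn (addn (muln 4 M) (muln 4 M)) (muln 4 M)).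

Local Close Scope ring_scope.
Lemma blk_lt4 (m : 'I_n) : blk m < 4.
Proof. by rewrite /blk ltn_divLR ?(ltn_ord m) // lt0n; apply/eqP=> M0; move: m; rewrite M0 => -[]. Qed.

Lemma find_t x y : x < 4 -> y < 4 -> x <> y -> exists2 t, t < 3 & (x + t.+1) %% 4 = y.
Proof.
case: x => [|[|[|[|x]]]] //; case: y => [|[|[|[|y]]]] //= _ _ _;
  by [exists 0 | exists 1 | exists 2].
Qed.

Lemma find_sh (m j : 'I_n) : blk m <> blk j ->
  exists t, (t < 3) /\ exists2 j' : 'I_n, blk j' = blk m & sh t j' = j.
Proof.
move=> hmj.
have M0 : 0 < M by case: M m {hmj} j => // [[]].
have [t ht et] := find_t (blk_lt4 m) (blk_lt4 j) hmj.
have pj : blk m * M + j %% M < n.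
  have h1 : j %% M < M by rewrite ltn_pmod.
  have h2 := blk_lt4 m. move: h1 h2; set r := j %% M; set q := blk m => h1 h2. nia.
exists t; split => //; exists (Ordinal pj).
  by rewrite /blk /= divnMDl // (divn_small (ltn_pmod j M0)) addn0.
apply: val_inj => /=; rewrite /blk /= divnMDl // (divn_small (ltn_pmod j M0)) addn0.
rewrite et modnMDl modn_mod. by rewrite [RHS](divn_eq j M).
Qed.
Local Open Scope ring_scope.

Lemma extract H U W (Z : 'M[C]_(n, N3)) d : Fm H U W Z = Rhs H d ->
  [/\ block_diag (D1of Z), block_diag (D2of Z), block_diag (D3of Z) &
   forall m j, blk m <> blk j -> BZ H U W Z m j = lamv d m * H m j].
Proof.
rewrite /Fm /Rhs => /eq_row_mx [/eq_row_mx [E1 E2] E3].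
have offz : forall (D X Y : 'M[C]_n), offb D + onb X = onb Y -> block_diag D.
  move=> D X Y e m j hmj; have := congr1 (fun A : 'M[C]_n => A m j) e; rewrite !mxE.
  have hb : (blk m == blk j) = false by apply/eqP.
  by rewrite hb addr0.
have onz : forall (D X Y : 'M[C]_n), offb D + onb X = onb Y ->
    forall m j, blk m = blk j -> X m j = Y m j.
  by move=> D X Y e m j h; have := congr1 (fun A : 'M[C]_n => A m j) e; rewrite !mxE h eqxx add0r.
split; [exact: offz E1 | exact: offz E2 | exact: offz E3 |].
move=> m j hmj; have [t [ht [j' hj' shj]]] := find_sh hmj.
have key : forall X Y : 'M[C]_n, (forall m j, blk m = blk j -> (shc t X) m j = (shc t Y) m j) ->
   X m j = Y m j.
  by move=> X Y h; have := h m j' (esym hj'); rewrite !mxE shj.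
have -> : lamv d m * H m j = LamH d H m j by rewrite mxE.
apply: key; case: t ht {shj} => [|[|[|//]]] _.
- exact: onz E1.
- exact: onz E2.
- exact: onz E3.
Qed.
End Extract.
Section Nat.
Variables (R1 R2 : comRingType) (f : {rmorphism R1 -> R2}) (M : nat).
Local Notation n := (muln 4 M).
Local Notation N3 := (addn (addn (muln 4 M) (muln 4 M)) (muln 4 M)).
Local Notation "A ^f" := (map_mx f A) : ring_scope.

Lemma map_onb (A : 'M[R1]_n) : (onb A)^f = onb A^f.
Proof. by apply/matrixP=> i j; rewrite !mxE; case: ifP; rewrite ?rmorph0. Qed.
Lemma map_offb (A : 'M[R1]_n) : (offb A)^f = offb A^f.
Proof. by apply/matrixP=> i j; rewrite !mxE; case: ifP; rewrite ?rmorph0. Qed.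
Lemma map_shc t (A : 'M[R1]_n) : (shc t A)^f = shc t A^f.
Proof. by apply/matrixP=> i j; rewrite !mxE. Qed.
Lemma map_BZ (H U W : 'M[R1]_n) (Z : 'M[R1]_(n, N3)) :
  (BZ H U W Z)^f = BZ H^f U^f W^f Z^f.
Proof. by rewrite /BZ /Bm /D1of /D2of /D3of !map_mxD !map_mxM !(map_lsubmx f, map_rsubmx f). Qed.
Lemma map_Fm (H U W : 'M[R1]_n) (Z : 'M[R1]_(n, N3)) :
  (Fm H U W Z)^f = Fm H^f U^f W^f Z^f.
Proof.
rewrite /Fm !(map_row_mx f) !map_mxD !map_onb !map_offb !map_shc map_BZ.
by rewrite /D1of /D2of /D3of !(map_lsubmx f, map_rsubmx f).
Qed.
Lemma map_Lm (H U W : 'M[R1]_n) : (Lm H U W)^f = Lm H^f U^f W^f.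
Proof. by apply: map_lin_mx => A; rewrite map_Fm. Qed.
Lemma map_lamv d (m : 'I_n) : f (lamv d m) = lamv (f d) m.
Proof. by rewrite /lamv rmorphM rmorph_int. Qed.
Lemma map_Rhs (H : 'M[R1]_n) d : (Rhs H d)^f = Rhs H^f (f d).
Proof.
have e : (LamH d H)^f = LamH (f d) H^f.
  by apply/matrixP=> i j; rewrite !mxE rmorphM map_lamv.
by rewrite /Rhs !(map_row_mx f) !map_onb !map_shc e.
Qed.
Lemma map_dd (H U W : 'M[R1]_n) : f (dd H U W) = dd H^f U^f W^f.
Proof. by rewrite /dd -det_map_mx map_Lm. Qed.
Lemma map_Zs (H U W : 'M[R1]_n) : (Zs H U W)^f = Zs H^f U^f W^f.
Proof. by rewrite /Zs map_vec_mx map_mxM map_mxvec map_Rhs rmorph1 map_mx_adj map_Lm. Qed.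
Lemma map_Ei (H U W : 'M[R1]_n) i : (Ei H U W i)^f = Ei H^f U^f W^f i.
Proof.
apply/matrixP=> a b; rewrite /Ei.
have e : BZ H^f U^f W^f (Zs H^f U^f W^f) = (BZ H U W (Zs H U W))^f by rewrite map_BZ map_Zs.
rewrite e; set B := BZ H U W (Zs H U W).
by rewrite !mxE rmorphB rmorphM map_lamv map_dd.
Qed.
End Nat.
Section Generic.
Variable M : nat.
Local Notation n := (muln 4 M).
Local Notation N3 := (addn (addn (muln 4 M) (muln 4 M)) (muln 4 M)).
Local Notation NN := (muln (muln 4 M) N3).

Definition Gx : 'M[{mpoly C[NN]}]_(n, N3) := vec_mx (\row_(k < NN) 'X_k).
Definition Hx := lsubmx (lsubmx Gx).
Definition Ux := rsubmx (lsubmx Gx).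
Definition Wx := rsubmx Gx.
Definition Pgen : {mpoly C[NN]} := \prod_(i < 4) \det (Ei Hx Ux Wx i).

Lemma Pgen_eval (H U W : 'M[C]_n) :
  Pgen.@[entries H U W] = \prod_(i < 4) \det (Ei H U W i).
Proof.
pose f : {rmorphism {mpoly C[NN]} -> C} := meval (entries H U W).
have eG : map_mx f Gx = row_mx (row_mx H U) W.
  rewrite /Gx map_vec_mx -[RHS]mxvecK; congr vec_mx.
  by apply/rowP=> k; rewrite !mxE; apply: mevalXU.
have eH : map_mx f Hx = H by rewrite /Hx !(map_lsubmx f) eG !row_mxKl.
have eU : map_mx f Ux = U by rewrite /Ux (map_rsubmx f) (map_lsubmx f) eG row_mxKl row_mxKr.
have eW : map_mx f Wx = W by rewrite /Wx (map_rsubmx f) eG row_mxKr.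
rewrite /Pgen -/(f _) rmorph_prod; apply: eq_bigr => i _.
by rewrite -det_map_mx map_Ei eH eU eW.
Qed.
End Generic.

Lemma intC_neq0 (z : int) : z != 0 -> (z%:~R : C) != 0.
Proof. move=> hz. have := @intr_eq0 (complex Rdefinitions.R) z. rewrite (negbTE hz). exact: negbT. Qed.

Definition hn (i j : nat) : int :=
  match i, j with
  | 0, 2 | 0, 3 | 1, 1 | 1, 3 | 2, 0 | 2, 1 | 2, 2 | 3, 0 | 3, 3 => 1
  | _, _ => 0 end.
Definition un (i j : nat) : int :=
  match i, j with
  | 0, 1 | 0, 2 | 1, 3 | 2, 0 | 3, 0 => 1
  | _, _ => 0 end.
Definition wn (i j : nat) : int :=
  match i, j with
  | 0, 1 | 0, 3 | 1, 1 | 1, 2 | 2, 0 | 3, 0 => 1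
  | _, _ => 0 end.
Definition an (i : nat) : int := match i with 2 => 1 | 3 => 2 | _ => 0 end.
Definition cn (i : nat) : int := match i with 3 => -1 | _ => 0 end.

Section P0.
Variable M : nat.
Hypothesis M0 : (0 < M)%N.
Local Notation n := (muln 4 M).
Local Notation N3 := (addn (addn (muln 4 M) (muln 4 M)) (muln 4 M)).

Local Close Scope ring_scope.
Lemma ant_proof (i : nat) (a : 'I_M) : i %% 4 * M + a < n.
Proof.
have h2 : i %% 4 < 4 by rewrite ltn_pmod.
have h1 := ltn_ord a.
move: h1 h2; set r := nat_of_ord a; set q := i %% 4 => h1 h2. nia.
Qed.
Definition ant (i : nat) (a : 'I_M) : 'I_n := Ordinal (ant_proof i a).
Lemma off_lt (k : 'I_n) : k %% M < M.
Proof. by rewrite ltn_pmod. Qed.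
Definition off_o (k : 'I_n) : 'I_M := Ordinal (off_lt k).
Definition blk_o (k : 'I_n) : 'I_4 := Ordinal (blk_lt4 k).

Lemma blk_ant i a : blk (ant i a) = i %% 4.
Proof. by rewrite /blk /= divnMDl // divn_small ?addn0. Qed.
Lemma mod_ant i a : ant i a %% M = a.
Proof. by rewrite /= modnMDl modn_small. Qed.
Lemma antK (k : 'I_n) : ant (blk k) (off_o k) = k.
Proof. by apply: val_inj => /=; rewrite modn_small ?blk_lt4 // /blk -divn_eq. Qed.
Lemma antenna_ant (i : 'I_4) a : antenna i a = ant i a.
Proof. by apply: val_inj => /=; rewrite modn_small. Qed.
Lemma ant_mod i a : ant (i %% 4) a = ant i a.
Proof. by apply: val_inj => /=; rewrite modn_mod. Qed.
Lemma ant_eq i j a b : (ant i a == ant j b) = (i %% 4 == j %% 4) && (a == b).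
Proof.
apply/eqP/andP => [e | [/eqP e1 /eqP e2]]; last by apply: val_inj => /=; rewrite e1 e2.
split; apply/eqP.
  by rewrite -(blk_ant i a) e blk_ant.
by apply: val_inj; rewrite /= -(mod_ant i a) e mod_ant.
Qed.
Local Open Scope ring_scope.

Lemma sum_split (F : 'I_n -> C) :
  \sum_(k < n) F k = \sum_(i < 4) \sum_(c < M) F (ant i c).
Proof.
rewrite pair_big /=.
rewrite (reindex (fun p : 'I_4 * 'I_M => ant p.1 p.2)) //=.
exists (fun k => (blk_o k, off_o k)) => [[i c] _ | k _] /=.
  congr pair; apply: val_inj => /=; [rewrite blk_ant | rewrite mod_ant]; rewrite ?modn_small //.
by rewrite antK.
Qed.

Definition K (g : nat -> nat -> int) : 'M[C]_n :=
  \matrix_(m, k) if modn m M == modn k M then (g (blk m) (blk k))%:~R else 0.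
Definition Dg (g : nat -> int) : 'M[C]_n :=
  \matrix_(m, k) if m == k then (g (blk m))%:~R else 0.

Lemma KMul g (D : 'M[C]_n) i a j :
  (K g *m D) (ant i a) j = \sum_(k < 4) (g (modn i 4) k)%:~R * D (ant k a) j.
Proof.
rewrite mxE sum_split; apply: eq_bigr => k _.
rewrite (bigD1 a) //= big1 ?addr0; first by rewrite mxE !mod_ant eqxx !blk_ant (modn_small (ltn_ord k)).
by move=> c hc; rewrite mxE !mod_ant ifF ?mul0r //; apply/negbTE; rewrite eq_sym; exact: hc.
Qed.
Lemma MulK g (D : 'M[C]_n) m j b :
  (D *m K g) m (ant j b) = \sum_(k < 4) D m (ant k b) * (g k (modn j 4))%:~R.
Proof.
rewrite mxE sum_split; apply: eq_bigr => k _.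
rewrite (bigD1 b) //= big1 ?addr0; first by rewrite mxE !mod_ant eqxx !blk_ant (modn_small (ltn_ord k)).
by move=> c hc; rewrite mxE !mod_ant ifF ?mulr0 //; apply/negbTE; exact: hc.
Qed.

Lemma mxDE (A B : 'M[C]_n) i j : (A + B) i j = A i j + B i j.
Proof. by rewrite mxE. Qed.

Lemma collapse (D : 'M[C]_n) (hD : block_diag D) (g : nat -> C) j a b :
  \sum_(k < 4) g k * D (ant k a) (ant j b) = g (modn j 4) * D (ant j a) (ant j b).
Proof.
have hj : (modn j 4 < 4)%N by rewrite ltn_pmod.
rewrite (bigD1 (Ordinal hj)) //= big1 ?addr0; first by rewrite ant_mod.
move=> k hk; rewrite hD ?mulr0 // !blk_ant (modn_small (ltn_ord k)) => e.
by move/eqP: hk; apply; apply: val_inj.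
Qed.

Lemma Bentry (D1 D2 D3 : 'M[C]_n) : block_diag D1 -> block_diag D2 -> block_diag D3 ->
  forall i j a b, Bm (K hn) (K un) (K wn) D1 D2 D3 (ant i a) (ant j b) =
   (hn (modn i 4) (modn j 4))%:~R * D1 (ant j a) (ant j b)
   + \sum_(k < 4) (hn (modn i 4) k)%:~R * D2 (ant k a) (ant k b) * (un k (modn j 4))%:~R
   + \sum_(k < 4) (wn (modn i 4) k)%:~R * D3 (ant k a) (ant k b) * (hn k (modn j 4))%:~R.
Proof.
move=> h1 h2 h3 i j a b.
rewrite /Bm !mxDE KMul (collapse h1 (fun k => (hn (modn i 4) k)%:~R)) !MulK.
congr (_ + _ + _); apply: eq_bigr => k _.
  by rewrite KMul (collapse h2 (fun k => (hn (modn i 4) k)%:~R)) (modn_small (ltn_ord k)).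
by rewrite KMul (collapse h3 (fun k => (wn (modn i 4) k)%:~R)) (modn_small (ltn_ord k)).
Qed.
End P0.
Section Inj.
Variable M : nat.
Hypothesis M0 : (0 < M)%N.
Local Notation n := (muln 4 M).
Arguments ant : simpl never.
Lemma solve12 (D1 D2 D3 : 'M[C]_n) : block_diag D1 -> block_diag D2 -> block_diag D3 ->
  forall a b, (forall i j, (i < 4)%N -> (j < 4)%N -> i != j ->
      Bm (K M hn) (K M un) (K M wn) D1 D2 D3 (ant M0 i a) (ant M0 j b) = 0) ->
  forall k, (k < 4)%N ->
   [/\ D1 (ant M0 k a) (ant M0 k b) = 0, D2 (ant M0 k a) (ant M0 k b) = 0
     & D3 (ant M0 k a) (ant M0 k b) = 0].
Proof.
move=> h1 h2 h3 a b hB.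
have e01 := hB 0 1 isT isT isT; rewrite Bentry // !big_ord_recr !big_ord0 /= in e01.
have e02 := hB 0 2 isT isT isT; rewrite Bentry // !big_ord_recr !big_ord0 /= in e02.
have e03 := hB 0 3 isT isT isT; rewrite Bentry // !big_ord_recr !big_ord0 /= in e03.
have e10 := hB 1 0 isT isT isT; rewrite Bentry // !big_ord_recr !big_ord0 /= in e10.
have e12 := hB 1 2 isT isT isT; rewrite Bentry // !big_ord_recr !big_ord0 /= in e12.
have e13 := hB 1 3 isT isT isT; rewrite Bentry // !big_ord_recr !big_ord0 /= in e13.
have e20 := hB 2 0 isT isT isT; rewrite Bentry // !big_ord_recr !big_ord0 /= in e20.
have e21 := hB 2 1 isT isT isT; rewrite Bentry // !big_ord_recr !big_ord0 /= in e21.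
have e23 := hB 2 3 isT isT isT; rewrite Bentry // !big_ord_recr !big_ord0 /= in e23.
have e30 := hB 3 0 isT isT isT; rewrite Bentry // !big_ord_recr !big_ord0 /= in e30.
have e31 := hB 3 1 isT isT isT; rewrite Bentry // !big_ord_recr !big_ord0 /= in e31.
have e32 := hB 3 2 isT isT isT; rewrite Bentry // !big_ord_recr !big_ord0 /= in e32.
set A0 := D1 (ant M0 0 a) (ant M0 0 b) in e01 e02 e03 e10 e12 e13 e20 e21 e23 e30 e31 e32 *.
set B0 := D2 (ant M0 0 a) (ant M0 0 b) in e01 e02 e03 e10 e12 e13 e20 e21 e23 e30 e31 e32 *.
set C0 := D3 (ant M0 0 a) (ant M0 0 b) in e01 e02 e03 e10 e12 e13 e20 e21 e23 e30 e31 e32 *.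
set A1 := D1 (ant M0 1 a) (ant M0 1 b) in e01 e02 e03 e10 e12 e13 e20 e21 e23 e30 e31 e32 *.
set B1 := D2 (ant M0 1 a) (ant M0 1 b) in e01 e02 e03 e10 e12 e13 e20 e21 e23 e30 e31 e32 *.
set C1 := D3 (ant M0 1 a) (ant M0 1 b) in e01 e02 e03 e10 e12 e13 e20 e21 e23 e30 e31 e32 *.
set A2 := D1 (ant M0 2 a) (ant M0 2 b) in e01 e02 e03 e10 e12 e13 e20 e21 e23 e30 e31 e32 *.
set B2 := D2 (ant M0 2 a) (ant M0 2 b) in e01 e02 e03 e10 e12 e13 e20 e21 e23 e30 e31 e32 *.
set C2 := D3 (ant M0 2 a) (ant M0 2 b) in e01 e02 e03 e10 e12 e13 e20 e21 e23 e30 e31 e32 *.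
set A3 := D1 (ant M0 3 a) (ant M0 3 b) in e01 e02 e03 e10 e12 e13 e20 e21 e23 e30 e31 e32 *.
set B3 := D2 (ant M0 3 a) (ant M0 3 b) in e01 e02 e03 e10 e12 e13 e20 e21 e23 e30 e31 e32 *.
set C3 := D3 (ant M0 3 a) (ant M0 3 b) in e01 e02 e03 e10 e12 e13 e20 e21 e23 e30 e31 e32 *.
have q01 : C1 = 0 by rewrite -[RHS]e01; ring.
have q02 : A2 = 0 by rewrite -[RHS]e02; ring.
have q03 : A3 + C1 + C3 = 0 by rewrite -[RHS]e03; ring.
have q10 : B3 + C2 = 0 by rewrite -[RHS]e10; ring.
have q12 : C2 = 0 by rewrite -[RHS]e12; ring.
have q13 : A3 + B1 + C1 = 0 by rewrite -[RHS]e13; ring.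
have q20 : A0 + B2 = 0 by rewrite -[RHS]e20; ring.
have q21 : A1 + B0 = 0 by rewrite -[RHS]e21; ring.
have q23 : B1 + C0 = 0 by rewrite -[RHS]e23; ring.
have q30 : A0 + B3 = 0 by rewrite -[RHS]e30; ring.
have q31 : B0 = 0 by rewrite -[RHS]e31; ring.
have q32 : B0 + C0 = 0 by rewrite -[RHS]e32; ring.
have zA0 : A0 = 0.
  have -> : A0 = - (B3 + C2) + (C2) + (A0 + B3) by ring.
  by rewrite q10 q30 q12; ring.
have zA1 : A1 = 0.
  have -> : A1 = (A1 + B0) - (B0) by ring.
  by rewrite q21 q31; ring.
have zA2 : A2 = 0 by rewrite q02.
have zA3 : A3 = 0.
  have -> : A3 = - (C1) + (A3 + B1 + C1) - (B1 + C0) - (B0) + (B0 + C0) by ring.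
  by rewrite q13 q23 q32 q01 q31; ring.
have zB0 : B0 = 0 by rewrite q31.
have zB1 : B1 = 0.
  have -> : B1 = (B1 + C0) + (B0) - (B0 + C0) by ring.
  by rewrite q23 q32 q31; ring.
have zB2 : B2 = 0.
  have -> : B2 = (B3 + C2) - (C2) + (A0 + B2) - (A0 + B3) by ring.
  by rewrite q10 q20 q30 q12; ring.
have zB3 : B3 = 0.
  have -> : B3 = (B3 + C2) - (C2) by ring.
  by rewrite q10 q12; ring.
have zC0 : C0 = 0.
  have -> : C0 = - (B0) + (B0 + C0) by ring.
  by rewrite q32 q31; ring.
have zC1 : C1 = 0 by rewrite q01.
have zC2 : C2 = 0 by rewrite q12.
have zC3 : C3 = 0.
  have -> : C3 = (A3 + C1 + C3) - (A3 + B1 + C1) + (B1 + C0) + (B0) - (B0 + C0) by ring.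
  by rewrite q03 q13 q23 q32 q31; ring.

by case=> [|[|[|[|//]]]] _; split.
Qed.
End Inj.
Definition en (i : nat) : int := match i with 0 => -1 | 1 => -2 | 2 => 1 | _ => 2 end.

Section P0b.
Variable M : nat.
Hypothesis M0 : (0 < M)%N.
Local Notation n := (muln 4 M).
Local Notation N3 := (addn (addn (muln 4 M) (muln 4 M)) (muln 4 M)).
Arguments ant : simpl never.

Definition H0 := K M hn.
Definition U0 := K M un.
Definition W0 := K M wn.
Definition Z0 : 'M[C]_(n, N3) := row_mx (row_mx (Dg M an) 0) (Dg M cn).

Lemma Dg_bd g : block_diag (Dg M g).
Proof. move=> m j hmj; rewrite mxE ifF //; apply/negbTE; apply/eqP => e; apply: hmj; rewrite e. done. Qed.
Lemma zero_bd : block_diag (0 : 'M[C]_n).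
Proof. by move=> m j _; rewrite mxE. Qed.

Lemma DgE g i j a b : Dg M g (ant M0 i a) (ant M0 j b) =
  if (modn i 4 == modn j 4) && (a == b) then (g (modn i 4))%:~R else 0.
Proof. by rewrite mxE ant_eq blk_ant. Qed.
Lemma KE g i j a b : K M g (ant M0 i a) (ant M0 j b) =
  if a == b then (g (modn i 4) (modn j 4))%:~R else 0.
Proof. by rewrite mxE !mod_ant !blk_ant. Qed.

Lemma offb_Dg g : offb (Dg M g) = 0.
Proof.
apply/matrixP=> m j; rewrite !mxE; case: ifP => // hb.
by case: eqP => // e; move: hb; rewrite e eqxx.
Qed.

Lemma lamvE (d : C) i a : lamv d (ant M0 i a) = d * (lam0 (modn i 4))%:~R.
Proof. by rewrite /lamv blk_ant. Qed.

Lemma sh_ant t (j : 'I_n) : sh t j = ant M0 (blk j + t.+1) (off_o M0 j).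
Proof. by apply: val_inj. Qed.

Lemma onb_shcE t (X : 'M[C]_n) m j :
  onb (shc t X) m j = if blk m == blk j then X m (sh t j) else 0.
Proof. by rewrite !mxE. Qed.
Lemma LamHE (d : C) (X : 'M[C]_n) m j : LamH d X m j = lamv d m * X m j.
Proof. by rewrite mxE. Qed.

Lemma e1 : D1of Z0 = Dg M an. Proof. by rewrite /D1of /Z0 !row_mxKl. Qed.
Lemma e2 : D2of Z0 = 0. Proof. by rewrite /D2of /Z0 row_mxKl row_mxKr. Qed.
Lemma e3 : D3of Z0 = Dg M cn. Proof. by rewrite /D3of /Z0 row_mxKr. Qed.

Lemma Fm_Z0 : Fm H0 U0 W0 Z0 = Rhs H0 1.
Proof.
have key : forall t, (t < 3)%N -> onb (shc t (BZ H0 U0 W0 Z0)) = onb (shc t (LamH 1 H0)).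
  move=> t ht; apply/matrixP=> m j.
  rewrite !onb_shcE; case: ifP => // /eqP hb.
  rewrite LamHE sh_ant -[in LHS](antK M0 m) -[in RHS](antK M0 m) /BZ e1 e2 e3 /H0 /U0 /W0.
  rewrite (Bentry M0 (Dg_bd an) zero_bd (Dg_bd cn)) lamvE KE.
  rewrite hb; set i := blk j; have hi : (i < 4)%N := blk_lt4 j.
  rewrite big1; last by move=> k _; rewrite mxE mulr0 mul0r.
  under eq_bigr => k _ do rewrite DgE eqxx /=.
  rewrite !DgE !eqxx (modn_small hi) /=.
  case: (off_o M0 m == off_o M0 j); last first.
    by rewrite !mulr0 big1 ?addr0 // => k _; rewrite mulr0 mul0r.
  rewrite !big_ord_recr !big_ord0 /=.
  clearbody i.
  by case: i hi => [|[|[|[|i]]]] hi //; case: t ht => [|[|[|t]]] ht //=; ring.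
rewrite /Fm e1 e2 e3 !offb_Dg linear0 !add0r /Rhs key // key // key //.
Qed.

Lemma Fm0_inj (Z : 'M[C]_(n, N3)) : Fm H0 U0 W0 Z = 0 -> Z = 0.
Proof.
move=> hZ.
have R0 : Rhs H0 0 = 0 by rewrite RhsZ scale0r.
have [b1 b2 b3 hB] := extract (etrans hZ (esym R0)).
have hB' : forall a b i j, (i < 4)%N -> (j < 4)%N -> i != j ->
    Bm (K M hn) (K M un) (K M wn) (D1of Z) (D2of Z) (D3of Z) (ant M0 i a) (ant M0 j b) = 0.
  move=> a b i j hi hj hij; have := hB (ant M0 i a) (ant M0 j b).
  rewrite !blk_ant !modn_small // /lamv mul0r mul0r => h; apply: h.
  by move/eqP: hij.
have zD : forall (D : 'M[C]_n), block_diag D ->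
    (forall k a b, (k < 4)%N -> D (ant M0 k a) (ant M0 k b) = 0) -> D = 0.
  move=> D bd hz; apply/matrixP=> m j; rewrite [RHS]mxE.
  case: (eqVneq (blk m) (blk j)) => e; last by apply: bd; apply/eqP.
  by rewrite -(antK M0 m) -(antK M0 j) -e; apply: hz; apply: blk_lt4.
have z1 : D1of Z = 0.
  by apply: (zD _ b1) => k a b hk; case: (solve12 b1 b2 b3 (hB' a b) hk).
have z2 : D2of Z = 0.
  by apply: (zD _ b2) => k a b hk; case: (solve12 b1 b2 b3 (hB' a b) hk).
have z3 : D3of Z = 0.
  by apply: (zD _ b3) => k a b hk; case: (solve12 b1 b2 b3 (hB' a b) hk).
rewrite -(hsubmxK Z) -(hsubmxK (lsubmx Z)).
by move: z1 z2 z3; rewrite /D1of /D2of /D3of => -> -> ->; rewrite !row_mx0.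
Qed.

Lemma d0_neq0 : dd H0 U0 W0 != 0.
Proof.
apply/negP => /det0P [v vn0 hv].
have : Fm H0 U0 W0 (vec_mx v) = 0.
  apply: (can_inj mxvecK); rewrite linear0 -mul_rV_lin; exact: hv.
by move/Fm0_inj => h; move: vn0; rewrite -(vec_mxK v) h linear0 eqxx.
Qed.

Lemma Zs0 : Zs H0 U0 W0 = dd H0 U0 W0 *: Z0.
Proof.
rewrite /Zs -Fm_Z0 -mul_vec_lin -mulmxA mul_mx_adj mul_mx_scalar linearZ /= mxvecK.
by [].
Qed.

Lemma BZZ (H U W : 'M[C]_n) d Z : BZ H U W (d *: Z) = d *: BZ H U W Z.
Proof.
rewrite /BZ /D1of /D2of /D3of !linearZ /= /Bm -!scalemxAr -!scalemxAl.
by rewrite !scalerDr.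
Qed.

Lemma scalemxE (d : C) (A : 'M[C]_n) x y : (d *: A) x y = d * A x y.
Proof. by rewrite mxE. Qed.

Lemma Ei0 i : Ei H0 U0 W0 i = (dd H0 U0 W0 * (en i)%:~R)%:M.
Proof.
apply/matrixP => a b; rewrite [LHS]mxE [RHS]mxE Zs0 BZZ !antenna_ant scalemxE.
rewrite /BZ e1 e2 e3 /H0 /U0 /W0 (Bentry M0 (Dg_bd an) zero_bd (Dg_bd cn)) lamvE KE.
rewrite big1; last by move=> k _; rewrite mxE mulr0 mul0r.
under eq_bigr => k _ do rewrite DgE eqxx /=.
rewrite !DgE !eqxx (modn_small (ltn_ord i)) /=.
set d := dd _ _ _.
case: (a == b); last first.
  by rewrite !mulr0 big1 ?addr0 ?mulr0 ?subrr // => k _; rewrite mulr0 mul0r.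
rewrite !big_ord_recr !big_ord0 /=.
by case: i => [[|[|[|[|i]]]] hi] //=; ring.
Qed.

Lemma det_Ei0 i : \det (Ei H0 U0 W0 i) != 0.
Proof.
rewrite Ei0 det_scalar expf_neq0 // mulf_neq0 ?d0_neq0 //.
by apply: intC_neq0; case: i => [[|[|[|[|i]]]] hi].
Qed.
End P0b.

Lemma p0_exists (M : nat) : (0 < M)%N ->
  exists H U W : 'M[C]_(4 * M), forall i, \det (Ei H U W i) != 0.
Proof. by move=> M0; exists (H0 M), (U0 M), (W0 M); exact: det_Ei0. Qed.

Theorem theorem6 (M : nat) (hM1 : (1 <= M)%N) (hM2 : (M <= 15)%N) :
  exists P : {mpoly C[4 * M * (4 * M + 4 * M + 4 * M)]},
    P != 0 /\
    forall H U W : 'M[C]_(4 * M),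
      P.@[entries H U W] != 0 ->
      exists (D1 D2 D3 : 'M[C]_(4 * M)) (lambda : 'I_(4 * M) -> C),
        [/\ block_diag D1, block_diag D2, block_diag D3,
          (forall m j : 'I_(4 * M), blk m <> blk j ->
             (H *m D1 + H *m D2 *m U + W *m D3 *m H) m j = lambda m * H m j) &
          (forall i : 'I_4,
             (\matrix_(a < M, b < M)
                ((H *m D1 + H *m D2 *m U + W *m D3 *m H) (antenna i a) (antenna i b)
                  - lambda (antenna i a) * H (antenna i a) (antenna i b)))
               \in unitmx)].
Proof.
exists (Pgen M); split.
  have [H0 [U0 [W0 hdet]]] := p0_exists hM1.
  apply/eqP => P0; have := Pgen_eval H0 U0 W0; rewrite P0 meval0 => /esym/eqP.
  by rewrite prodf_seq_eq0 => /hasP [i _ /=]; rewrite (negbTE (hdet i)).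
move=> H U W; rewrite Pgen_eval => hP.
have [bd1 bd2 bd3 hB] := extract (Fm_Zs H U W).
exists (D1of (Zs H U W)), (D2of (Zs H U W)), (D3of (Zs H U W)), (lamv (dd H U W)).
split => // i.
rewrite unitmxE unitfE -/(BZ H U W (Zs H U W)).
move: hP; rewrite prodf_seq_neq0 => /allP /(_ i (mem_index_enum _)) /=.
by rewrite /Ei.
Qed.
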